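(* If the Follow algorithm (described in the context) discovers an edge (observes a successful infection along it) belonging to some $\delta$-edge connected component of $\mathcal G$, then it discovers every edge of that $\delta$-edge connected component.
   Context: A temporal graph $\mathcal G=(V,E,\lambda)$ with lifetime $T_{\max}$ consists of a finite undirected static graph $(V,E)$ and a labeling $\lambda:E\to\{1,\dots,T_{\max}\}$; edge $e$ is present only at time $\lambda(e)$. Infection model with parameter $\delta\in\mathbb N^+$: a seed $(u,t)$ makes $u$ infected at time $t$; otherwise a susceptible node $u$ becomes infected at time $t$ iff some neighbour $v$ infectious at time $t$ has $\lambda(uv)=t$ (exactly one infector recorded if several exist). A node infected at time $t$ is infectious at times $t+1,\dots,t+\delta$ and resistant afterwards. Each round, the Discoverer submits seed infections and observes an infection log (triples $(u,v,t)$: $u$ infected $v$ at time $t$). $\delta$-edge connected components: relate two edges if they share an endpoint and their labels differ by at most $\delta$; the equivalence classes of the transitive closure are the $\delta$-edge connected components. Subroutine Explore$(u,t)$: for each $t'\in\{t-\delta-1,t-1,t\}$, if no round with seed $(u,t')$ was performed, perform a round with the single seed $(u,t')$ and record it; then for each newly observed successful infection along an edge $uv$ at time $t''$, call Explore$(v,t'')$. Algorithm Follow: pick any node $v_0$; for each $i\in[0,\lceil T_{\max}/\delta\rceil]$ perform a round with single seed $(v_0,i\delta)$; for each edge $e=v_0u$ along which an infection succeeds, call Explore$(u,\lambda(e))$. *)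

(* Defs.v *)
From mathcomp Require Import all_boot all_order all_algebra.
From Stdlib Require Import Relations.
Set Implicit Arguments. Unset Strict Implicit. Unset Printing Implicit Defensive.
Import Order.TTheory GRing.Theory Num.Theory.
Local Open Scope ring_scope.

Section TemporalGraph.
Variable V : finType.
Variable adj : rel V.
(* labeling: lam u v is the (unique) time at which edge uv is present *)
Variable lam : V -> V -> int.
Variable delta : nat.

Definition temporal_graph (Tmax : nat) : Prop :=
  (forall u v, adj u v = adj v u) /\ (forall u, ~~ adj u u) /\
  (forall u v, adj u v -> lam u v = lam v u) /\
  (forall u v, adj u v -> 1 <= lam u v <= Tmax%:Z).

(* inf u = Some t : u got infected at time t; None : never infected *)
Definition infectious (inf : V -> option int) (v : V) (t : int) : Prop :=
  exists tv, inf v = Some tv /\ tv < t /\ t <= tv + delta%:Z.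

Definition can_infect (inf : V -> option int) (u : V) (t : int) : Prop :=
  exists v, infectious inf v t /\ adj v u /\ lam v u = t.

Definition infection_times (s : V) (t0 : int) (inf : V -> option int) : Prop :=
  inf s = Some t0 /\
  forall u, u != s ->
    (forall t, inf u = Some t <->
       (can_infect inf u t /\ forall t', t' < t -> ~ can_infect inf u t')) /\
    (inf u = None -> forall t, ~ can_infect inf u t).

(* A log is a predicate on triples (u, v, t) : "u infected v at time t". *)
Definition valid_log (s : V) (t0 : int) (L : V -> V -> int -> Prop) : Prop :=
  exists inf, infection_times s t0 inf /\
    (forall u v t, L u v t ->
       [/\ v != s, inf v = Some t, infectious inf u t, adj u v & lam u v = t]) /\
    (forall v t, v != s -> inf v = Some t -> exists! u, L u v t).

(* The Follow algorithm, as the closure of the rounds it performs.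
   obs u t is the log observed for the round with the single seed (u, t)
   (each seed is used in at most one round). *)
Section Follow.
Variable Tmax : nat.
Variable obs : V -> int -> V -> V -> int -> Prop.
Variable v0 : V.

Inductive performed : V -> int -> Prop :=
| perf_init (i : nat) :
    (i <= (Tmax + delta - 1) %/ delta)%N -> performed v0 (i * delta)%N%:Z
| perf_explore (u : V) (t t' : int) :
    explored u t ->
    t' \in [:: t - delta%:Z - 1; t - 1; t] -> performed u t'
with explored : V -> int -> Prop :=
| expl_call (u : V) (s : int) (w : V) (t : int) :
    performed u s -> obs u s u w t -> explored w t.

Definition discovered (a b : V) : Prop :=
  exists u s t, performed u s /\ (obs u s a b t \/ obs u s b a t).
End Follow.

Definition delta_rel (p q : V * V) : Prop :=
  adj p.1 p.2 /\ adj q.1 q.2 /\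
  (p.1 = q.1 \/ p.1 = q.2 \/ p.2 = q.1 \/ p.2 = q.2) /\
  `|lam p.1 p.2 - lam q.1 q.2| <= delta%:Z.

Definition same_delta_component (p q : V * V) : Prop :=
  clos_refl_trans (V * V) delta_rel p q.
End TemporalGraph.

(* Main.v *)
Require Import Defs.
From mathcomp Require Import all_boot all_order all_algebra zify.
From Stdlib Require Import Relations.
Local Open Scope ring_scope.

Lemma seed_lt (V : finType) (adj : rel V) (lam : V -> V -> int) (delta : nat)
  (s : V) (t0 : int) (inf : V -> option int) :
  infection_times adj lam delta s t0 inf ->
  forall x tx, x != s -> inf x = Some tx -> t0 < tx.
Proof.
move=> [Hs Hinf].
pose B (t : int) := [set y | if inf y is Some ty then ty < t else false].
have HP : forall v tv tx, inf v = Some tv -> tv < tx -> B tv \proper B tx.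
  move=> v tv tx Hv Hlt.
  apply/properP; split. apply/subsetP => y; rewrite !inE. case: (inf y) => // ty Hty. lia.
  exists v. by rewrite !inE Hv. rewrite !inE Hv. lia.
suff H : forall k x tx, (#|B tx| <= k)%N -> x != s -> inf x = Some tx -> t0 < tx.
  by move=> x tx; apply: (H _ x tx (leqnn _)).
elim=> [|k IH] x tx Hk Hx Htx.
all: have [Hc _] := Hinf x Hx.
all: have [[v [[tv [Hv [Hlt Hle]]] _]] _] := (Hc tx).1 Htx.
all: have [/eqP Evs|Nvs] := boolP (v == s).
all: try (subst v; rewrite Hs in Hv; case: Hv => Hv; rewrite Hv; exact: Hlt).
all: have := proper_card (HP _ _ _ Hv Hlt) => Hp.
  lia.
have H := IH v tv.
have Hk' : (#|B tv| <= k)%N by lia.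
have := H Hk' Nvs Hv; lia.
Qed.
Arguments seed_lt {V adj lam delta s t0 inf}.

Definition Gprop (V : finType) (adj : rel V) (lam : V -> V -> int) (delta Tmax : nat)
  (obs : V -> int -> V -> V -> int -> Prop) (v0 : V) (n : nat) : Prop :=
  forall z s w, performed delta Tmax obs v0 z s -> adj z w -> s < lam z w ->
    lam z w <= s + delta%:Z -> lam z w - s <= n%:Z ->
    explored delta Tmax obs v0 w (lam z w).
Arguments Gprop {V}.

Lemma perf_self (V : finType) (delta Tmax : nat)
  (obs : V -> int -> V -> V -> int -> Prop) (v0 : V) u t :
  explored delta Tmax obs v0 u t -> performed delta Tmax obs v0 u t.
Proof. move=> H; apply: (perf_explore H); by rewrite !inE eqxx !orbT. Qed.
Arguments perf_self {V delta Tmax obs v0 u t}.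

Lemma perf_pred (V : finType) (delta Tmax : nat)
  (obs : V -> int -> V -> V -> int -> Prop) (v0 : V) u t :
  explored delta Tmax obs v0 u t -> performed delta Tmax obs v0 u (t - 1).
Proof. move=> H; apply: (perf_explore H); by rewrite !inE eqxx !orbT. Qed.
Arguments perf_pred {V delta Tmax obs v0 u t}.

Lemma H1 (V : finType) (adj : rel V) (lam : V -> V -> int) (delta Tmax : nat)
  (obs : V -> int -> V -> V -> int -> Prop) (v0 : V)
  (Hvalid : forall u t, valid_log adj lam delta u t (obs u t)) (N : nat) :
  (forall m, (m < N)%N -> Gprop adj lam delta Tmax obs v0 m) ->
  forall u s, performed delta Tmax obs v0 u s -> forall x y ly, obs u s x y ly ->
    ly - s <= N%:Z -> explored delta Tmax obs v0 y ly.
Proof.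
move=> HG u s Hperf.
have [inf [Hit [Hobs Hex]]] := Hvalid u s.
suff H : forall k x y ly, obs u s x y ly -> ly - s <= k%:Z -> ly - s <= N%:Z ->
    explored delta Tmax obs v0 y ly.
  move=> x y ly Ho HN; exact: (H (absz (ly - s)) x y ly Ho ltac:(lia) HN).
elim=> [|k IH] x y ly Ho Hk HN;
  have [Hy Hiy [lx [Hix [Hlx1 Hlx2]]] Hxy Hl] := Hobs _ _ _ Ho;
  have Hsy := seed_lt Hit _ _ Hy Hiy;
  (have [/eqP Exu|Nxu] := boolP (x == u); first by subst x; exact: expl_call Hperf Ho);
  have Hsx := seed_lt Hit _ _ Nxu Hix.
  lia.
have [x' [Hox' _]] := Hex x lx Nxu Hix.
have Hex_x := IH x' x lx Hox' ltac:(lia) ltac:(lia).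
rewrite -Hl.
apply: (HG (absz (ly - lx)) ltac:(lia) x lx y).
- exact: perf_self.
- exact: Hxy.
- lia.
- lia.
- lia.
Qed.
Arguments H1 {V adj lam delta Tmax obs v0}.

Lemma Gall (V : finType) (adj : rel V) (lam : V -> V -> int) (delta Tmax : nat)
  (obs : V -> int -> V -> V -> int -> Prop) (v0 : V)
  (Hsym : forall u v, adj u v = adj v u) (Hirr : forall u, ~~ adj u u)
  (Hlsym : forall u v, adj u v -> lam u v = lam v u) (Hd : (0 < delta)%N)
  (Hvalid : forall u t, valid_log adj lam delta u t (obs u t)) :
  forall n, Gprop adj lam delta Tmax obs v0 n.
Proof.
elim/ltn_ind=> n IH z s w Hperf Hzw Hl1 Hl2 Hn.
have [inf [Hit [Hobs Hex]]] := Hvalid z s.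
have Hwz : w != z by apply/eqP => E; subst w; move: (Hirr z); rewrite Hzw.
have [Hs Hinf] := Hit.
have [Hc HN] := Hinf w Hwz.
have Hcan : can_infect adj lam delta inf w (lam z w).
  by exists z; split => //; exists s; split => //; split.
case Hiw: (inf w) => [l'|]; last by case: (HN Hiw _ Hcan).
have [_ Hmin] := (Hc l').1 Hiw.
have Hll : l' <= lam z w.
  case: (boolP (l' <= lam z w)) => // Hnl; exfalso; apply: (Hmin (lam z w)) => //; lia.
have Hsl := seed_lt Hit _ _ Hwz Hiw.
have [El|Hlt] : l' = lam z w \/ l' < lam z w by lia.
- subst l'.
  have [u [Hou _]] := Hex w _ Hwz Hiw.
  have [_ _ [lu [Hiu [Hlu1 Hlu2]]] Huw Hluw] := Hobs _ _ _ Hou.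
  have [/eqP Euz|Nuz] := boolP (u == z).
    by subst u; exact: expl_call Hperf Hou.
  have Hsu := seed_lt Hit _ _ Nuz Hiu.
  have [u' [Hou' _]] := Hex u _ Nuz Hiu.
  have Heu := H1 Hvalid n IH z s Hperf u' u lu Hou' ltac:(lia).
  rewrite -Hluw.
  apply: (IH (absz (lam z w - lu)) ltac:(lia) u lu w) => //.
  + exact: perf_self.
  + lia.
  + lia.
  + lia.
- have [u [Hou _]] := Hex w _ Hwz Hiw.
  have Hew := H1 Hvalid n IH z s Hperf u w l' Hou ltac:(lia).
  have Hez : explored delta Tmax obs v0 z (lam z w).
    rewrite Hlsym //.
    apply: (IH (absz (lam z w - l')) ltac:(lia) w l' z).
    + exact: perf_self.
    + by rewrite Hsym.
    + rewrite -Hlsym //; lia.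
    + rewrite -Hlsym //; lia.
    + rewrite -Hlsym //; lia.
  apply: (IH 1%N ltac:(lia) z (lam z w - 1) w) => //.
  + exact: perf_pred.
  + lia.
  + lia.
  + lia.
Qed.
Arguments Gall {V adj lam delta Tmax obs v0}.

Lemma direct (V : finType) (adj : rel V) (lam : V -> V -> int) (delta : nat)
  (obs : V -> int -> V -> V -> int -> Prop)
  (Hirr : forall u, ~~ adj u u) (Hd : (0 < delta)%N)
  (Hvalid : forall u t, valid_log adj lam delta u t (obs u t)) z w :
  adj z w -> obs z (lam z w - 1) z w (lam z w).
Proof.
move=> Hzw; set s := lam z w - 1.
have [inf [Hit [Hobs Hex]]] := Hvalid z s.
have Hwz : w != z by apply/eqP => E; subst w; move: (Hirr z); rewrite Hzw.
have [Hs Hinf] := Hit.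
have [Hc HN] := Hinf w Hwz.
have Hcan : can_infect adj lam delta inf w (lam z w).
  exists z; split => //; exists s; split => //; split; rewrite /s; lia.
case Hiw: (inf w) => [l'|]; last by case: (HN Hiw _ Hcan).
have [_ Hmin] := (Hc l').1 Hiw.
have Hll : l' <= lam z w.
  case: (boolP (l' <= lam z w)) => // Hnl; exfalso; apply: (Hmin (lam z w)) => //; lia.
have Hsl := seed_lt Hit _ _ Hwz Hiw.
have El : l' = lam z w by rewrite /s in Hsl; lia.
subst l'.
have [u [Hou _]] := Hex w _ Hwz Hiw.
have [_ _ [lu [Hiu [Hlu1 Hlu2]]] Huw Hluw] := Hobs _ _ _ Hou.
have [/eqP Euz|Nuz] := boolP (u == z); first by subst u.
have Hsu := seed_lt Hit _ _ Nuz Hiu.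
rewrite /s in Hsu; lia.
Qed.

Lemma H2 (V : finType) (adj : rel V) (lam : V -> V -> int) (delta Tmax : nat)
  (obs : V -> int -> V -> V -> int -> Prop) (v0 : V)
  (Hsym : forall u v, adj u v = adj v u) (Hirr : forall u, ~~ adj u u)
  (Hlsym : forall u v, adj u v -> lam u v = lam v u) (Hd : (0 < delta)%N)
  (Hvalid : forall u t, valid_log adj lam delta u t (obs u t)) z w t :
  explored delta Tmax obs v0 z t -> adj z w -> `|lam z w - t| <= delta%:Z ->
  explored delta Tmax obs v0 w (lam z w) /\ explored delta Tmax obs v0 z (lam z w).
Proof.
move=> Hez Hzw Hd2.
have G := @Gall V adj lam delta Tmax obs v0 Hsym Hirr Hlsym Hd Hvalid.
have Hw : explored delta Tmax obs v0 w (lam z w).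
  have [Hlt|[Heq|Hgt]] : lam z w < t \/ lam z w = t \/ t < lam z w by lia.
    apply: (G (absz (lam z w - (t - delta%:Z - 1))%R) z (t - delta%:Z - 1) w) => //; try lia.
    by apply: (perf_explore Hez); rewrite !inE eqxx.
  - apply: (G (absz (lam z w - (t - 1))%R) z (t - 1) w) => //; try lia.
    exact: perf_pred.
  - apply: (G (absz (lam z w - t)%R) z t w) => //; try lia.
    exact: perf_self.
split => //.
rewrite Hlsym //.
apply: (G 1%N w (lam w z - 1) z) => //; try lia.
- by rewrite -Hlsym //; exact: perf_pred.
- by rewrite Hsym.
Qed.
Arguments H2 {V adj lam delta Tmax obs v0}.

Theorem mainTheorem9 (V : finType) (adj : rel V) (lam : V -> V -> int)
  (Tmax delta : nat) (obs : V -> int -> V -> V -> int -> Prop) (v0 : V) :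
  temporal_graph adj lam Tmax ->
  (0 < delta)%N ->
  (forall u t, valid_log adj lam delta u t (obs u t)) ->
  forall a b c d : V, adj a b -> adj c d ->
  same_delta_component adj lam delta (a, b) (c, d) ->
  discovered delta Tmax obs v0 a b ->
  discovered delta Tmax obs v0 c d.
Proof.
move=> [Hsym [Hirr [Hlsym _]]] Hd Hvalid a b c d Hab Hcd Hcomp Hdisc.
pose Good (p : V * V) := explored delta Tmax obs v0 p.1 (lam p.1 p.2) /\
                         explored delta Tmax obs v0 p.2 (lam p.1 p.2).
have HG := @Gall V adj lam delta Tmax obs v0 Hsym Hirr Hlsym Hd Hvalid.
have Hstep : forall z t c d, explored delta Tmax obs v0 z t -> (z = c \/ z = d) ->
    adj c d -> `|lam c d - t| <= delta%:Z -> Good (c, d).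
  move=> z t c' d' Hz [E|E] Hc'd' Hl; subst z.
  - by have [? ?] := H2 Hsym Hirr Hlsym Hd Hvalid c' d' t Hz Hc'd' Hl.
  - rewrite /Good /= Hlsym //.
    have Hd'c' : adj d' c' by rewrite Hsym.
    have [? ?] := H2 Hsym Hirr Hlsym Hd Hvalid d' c' t Hz Hd'c' ltac:(rewrite -Hlsym //).
    by split.
have Ga : Good (a, b).
  case: Hdisc => u [s [t [Hperf Ho]]].
  have Hx : forall x y, obs u s x y t -> Good (x, y).
    move=> x y Hxy.
    have [inf [_ [Hobs _]]] := Hvalid u s.
    have [_ _ _ Hadj Hl] := Hobs _ _ _ Hxy.
    have Hey := H1 Hvalid (absz (t - s)) (fun m _ => HG m) u s Hperf x y t Hxy ltac:(lia).
    have Hyx : adj y x by rewrite Hsym.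
    apply: (Hstep y t) => //; [by right | lia].
  case: Ho => Ho.
  - exact: Hx.
  - have [Hb Ha] := Hx _ _ Ho; rewrite /Good /= Hlsym //; by split.
have Gc : Good (c, d).
  elim: Hcomp Ga => [p q [Hp [Hq [Hsh Hl]]] Gp | p Gp | p q r _ IH1 _ IH2 Gp] //; last by apply: IH2; apply: IH1.
  case: p q Hp Hq Hsh Hl Gp => p1 p2 [q1 q2] /= Hp Hq Hsh Hl [G1 G2].
  have Hl' : `|lam q1 q2 - lam p1 p2| <= delta%:Z by lia.
  case: Hsh => [E|[E|[E|E]]].
  - exact: (Hstep p1 _ q1 q2 G1 (or_introl E) Hq Hl').
  - exact: (Hstep p1 _ q1 q2 G1 (or_intror E) Hq Hl').
  - exact: (Hstep p2 _ q1 q2 G2 (or_introl E) Hq Hl').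
  - exact: (Hstep p2 _ q1 q2 G2 (or_intror E) Hq Hl').
case: Gc => /= Hc _.
exists c, (lam c d - 1), (lam c d); split.
- exact: perf_pred.
- left; exact: direct Hirr Hd Hvalid c d Hcd.
Qed.
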